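(* Let $\mathcal{G}=(\mathcal{N},\mathcal{P})$ be a connected directed graph with nodes $\mathcal{N}=\{1,\dots,N\}$ and edges (pipes) $\mathcal{P}=\{1,\dots,P\}$, each edge written $\ell=(m,n)$ with $m,n\in\mathcal{N}$, and let $\mathbf{A}\in\mathbb{R}^{P\times N}$ be its edge-node incidence matrix ($A_{\ell,m}=+1$, $A_{\ell,n}=-1$ for $\ell=(m,n)$, all other entries of row $\ell$ zero). The edge set is partitioned as $\mathcal{P}=\mathcal{P}_a\cup\bar{\mathcal{P}}_a$ into compressor edges $\mathcal{P}_a$ and lossy pipes $\bar{\mathcal{P}}_a=\mathcal{P}\setminus\mathcal{P}_a$. Assume every cycle of $\mathcal{G}$ contains at least one lossy pipe. Fix a reference node $r\in\mathcal{N}$ with given value $\psi_r$, a vector $\mathbf{q}\in\mathbb{R}^N$ with $\mathbf{1}^\top\mathbf{q}=0$, friction parameters $a_\ell>0$ for $\ell\in\bar{\mathcal{P}}_a$, and compression ratios $\alpha_\ell>0$ for $\ell\in\mathcal{P}_a$. Consider the gas flow problem: find $\boldsymbol{\phi}\in\mathbb{R}^P$ and $\boldsymbol{\psi}\in\mathbb{R}^N$ (with the $r$-th entry equal to the given $\psi_r$) such that (i) $\mathbf{A}^\top\boldsymbol{\phi}=\mathbf{q}$; (ii) $\psi_m-\psi_n=a_\ell\,\mathrm{sign}(\phi_\ell)\,\phi_\ell^2$ for all $\ell=(m,n)\in\bar{\mathcal{P}}_a$, and $\psi_n\ge 0$ for all $n\in\mathcal{N}$; (iii) $\psi_n=\alpha_\ell\psi_m$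 and $\phi_\ell\ge 0$ for all $\ell=(m,n)\in\mathcal{P}_a$. Then, if this problem has a solution $(\boldsymbol{\phi},\boldsymbol{\psi})$, the solution is unique.
   Context: $\mathrm{sign}(x)$ equals $+1$ if $x>0$, $-1$ if $x<0$, and $0$ if $x=0$. A cycle is a closed path in the underlying undirected graph starting and ending at the same node without repeating edges or nodes. The variables $\psi_n$ represent squared gas pressures at nodes, $\phi_\ell$ gas flows on edges, and $q_n$ nodal gas injections. *)

(* Defs.v *)
From HB Require Import structures.
From mathcomp Require Import all_boot all_order all_algebra.
Set Implicit Arguments. Unset Strict Implicit. Unset Printing Implicit Defensive.
Import Order.TTheory GRing.Theory Num.Theory.
Local Open Scope ring_scope.

Definition joins N P (src dst : 'I_P -> 'I_N) (l : 'I_P) (u v : 'I_N) : bool :=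
  ((src l == u) && (dst l == v)) || ((src l == v) && (dst l == u)).

Definition uadj N P (src dst : 'I_P -> 'I_N) : rel 'I_N :=
  fun u v => [exists l, joins src dst l u v].

Definition connected_graph N P (src dst : 'I_P -> 'I_N) : Prop :=
  forall u v : 'I_N, connect (uadj src dst) u v.

Definition is_cycle N P (src dst : 'I_P -> 'I_N)
    (vs : seq 'I_N) (es : seq 'I_P) : Prop :=
  [/\ 0 < size es, size vs = size es, uniq vs, uniq es &
      forall (i : nat) (hi : i < size es) (v0 : 'I_N) (e0 : 'I_P),
        joins src dst (nth e0 es i) (nth v0 vs i) (nth v0 vs ((i.+1) %% size es))]%N.

Definition incidence (R : pzRingType) N P (src dst : 'I_P -> 'I_N) : 'M[R]_(P, N) :=
  \matrix_(l < P, j < N) ((j == src l)%:R - (j == dst l)%:R).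

Definition gas_flow_solution (R : realFieldType) N P (src dst : 'I_P -> 'I_N)
    (comp : {set 'I_P}) (r : 'I_N) (psir : R) (q : 'cV[R]_N)
    (a alpha : 'I_P -> R) (phi : 'cV[R]_P) (psi : 'cV[R]_N) : Prop :=
  [/\ psi r 0 = psir,
      (incidence R src dst)^T *m phi = q,
      (forall l : 'I_P, l \notin comp ->
         psi (src l) 0 - psi (dst l) 0 = a l * Num.sg (phi l 0) * (phi l 0) ^+ 2),
      (forall n : 'I_N, 0 <= psi n 0) &
      (forall l : 'I_P, l \in comp ->
         psi (dst l) 0 = alpha l * psi (src l) 0 /\ 0 <= phi l 0)].

(* Main.v *)
Require Import Defs.
From mathcomp Require Import all_boot all_order all_algebra.
From mathcomp Require Import lra.
Set Implicit Arguments. Unset Strict Implicit. Unset Printing Implicit Defensive.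
Import Order.TTheory GRing.Theory Num.Theory.
Local Open Scope ring_scope.

Definition touches N P (src dst : 'I_P -> 'I_N) (l : 'I_P) (v : 'I_N) : bool :=
  (src l == v) || (dst l == v).

Definition is_path N P (src dst : 'I_P -> 'I_N) (vs : seq 'I_N) (es : seq 'I_P) : Prop :=
  [/\ size vs = (size es).+1, uniq vs, uniq es &
      forall (i : nat) (hi : i < size es) (v0 : 'I_N) (e0 : 'I_P),
        joins src dst (nth e0 es i) (nth v0 vs i) (nth v0 vs i.+1)]%N.

Lemma joinsC N P (src dst : 'I_P -> 'I_N) l u v :
  joins src dst l u v = joins src dst l v u.
Proof. by rewrite /joins orbC. Qed.

Lemma joins_touch N P (src dst : 'I_P -> 'I_N) l x y z :
  joins src dst l x y -> touches src dst l z -> z = x \/ z = y.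
Proof.
by rewrite /joins /touches => /orP[] /andP[/eqP-> /eqP->] /orP[] /eqP ->; auto.
Qed.

Lemma joins_touchl N P (src dst : 'I_P -> 'I_N) l x y :
  joins src dst l x y -> touches src dst l x.
Proof.
by rewrite /joins /touches => /orP[] /andP[/eqP-> /eqP->]; rewrite eqxx ?orbT.
Qed.

Lemma joins_loop N P (src dst : 'I_P -> 'I_N) l x y :
  joins src dst l x y -> src l == dst l -> x = y.
Proof.
by rewrite /joins => /orP[] /andP[/eqP-> /eqP->] /eqP.
Qed.

Lemma path_step N P (src dst : 'I_P -> 'I_N) (S : pred 'I_P) (v0 : 'I_N) vs es l :
  is_path src dst (v0 :: vs) es -> all S es -> S l -> touches src dst l v0 ->
  ((0 < size es)%N -> l != nth l es 0) ->
  (exists vs' es', is_cycle src dst vs' es' /\ all S es') \/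
  (exists w, is_path src dst (w :: v0 :: vs) (l :: es)).
Proof.
move=> [hsz hu hue hj] hS Sl tl hne.
set w := if src l == v0 then dst l else src l.
have Jw : joins src dst l v0 w.
  rewrite /w /joins; move: tl; rewrite /touches.
  case: eqP => [->|_] /=; first by rewrite !eqxx.
  by move=> /eqP ->; rewrite !eqxx ?orbT ?andbT.
have lnot : l \notin es.
  apply/negP => lin.
  have hm : (index l es < size es)%N by rewrite index_mem.
  have := hj _ hm v0 l; rewrite nth_index //.
  move=> /joins_touch /(_ tl) [] /eqP.
  - rewrite -[X in X == _]/(nth v0 (v0 :: vs) 0) nth_uniq //; last by rewrite hsz ltnS ltnW.
    move/eqP => h0.
    have := hne (leq_ltn_trans (leq0n _) hm).
    by rewrite h0 nth_index // eqxx.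
  - rewrite -[X in X == _]/(nth v0 (v0 :: vs) 0) nth_uniq //; last by rewrite hsz ltnS.
case: (boolP (w \in v0 :: vs)) => win.
  left.
  set j := index w (v0 :: vs).
  have hj' : (j < size (v0 :: vs))%N by rewrite index_mem.
  have hjes : (j <= size es)%N by move: hj'; rewrite hsz ltnS.
  exists (take j.+1 (v0 :: vs)), (rcons (take j es) l); split.
    split.
    - by rewrite size_rcons.
    - by rewrite size_rcons size_takel // size_takel.
    - exact: take_uniq.
    - rewrite rcons_uniq take_uniq // andbT.
      by apply: contra lnot; apply: mem_take.
    - move=> i hi v1 e1.
      rewrite size_rcons size_takel // in hi.
      rewrite size_rcons size_takel // nth_rcons size_takel //.
      rewrite (nth_take _ hi).
      case: (ltngtP i j) => hij.
      + rewrite modn_small // nth_take // nth_take //.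
        apply: hj.
        exact: (leq_trans hij hjes).
      + by move: hi; rewrite ltnS leqNgt hij.
      + rewrite hij modnn /= nth_index //.
        by rewrite joinsC.
  rewrite all_rcons Sl /=.
  by apply/allP => x /mem_take; move/allP: hS; apply.
right; exists w; split.
- by move: hsz => /= ->.
- by rewrite /= -/(uniq (v0 :: vs)) hu andbT.
- by rewrite /= lnot hue.
- case => [|i] hi v1 e1 /=; first by rewrite joinsC.
  exact: hj.
Qed.

Lemma degree (R : numDomainType) N P (src dst : 'I_P -> 'I_N) (d : 'I_P -> R)
  (hc : forall n, \sum_l ((n == src l)%:R - (n == dst l)%:R) * d l = 0)
  e0 v0 : d e0 != 0 -> src e0 != dst e0 -> touches src dst e0 v0 ->
  exists l, [&& d l != 0, l != e0 & touches src dst l v0].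
Proof.
move=> de0 sd te0.
case: (boolP [exists l, [&& d l != 0, l != e0 & touches src dst l v0]]) => [/existsP//|/existsPn H].
exfalso; have := hc v0; rewrite (bigD1 e0) //= big1 ?addr0.
  move/eqP; rewrite mulf_eq0 (negbTE de0) orbF.
  move: te0 sd; rewrite /touches => /orP[] /eqP <-.
  - by move=> /negbTE; rewrite eqxx eq_sym => ->; rewrite subr0 oner_eq0.
  - by rewrite eq_sym => /negbTE ->; rewrite eqxx sub0r oppr_eq0 oner_eq0.
move=> l le0; move: (H l); rewrite le0 /=.
case: (boolP (d l == 0)) => [/eqP -> _|dl]; first by rewrite mulr0.
rewrite /touches negb_or => /andP[s d'].
by rewrite eq_sym (negbTE s) eq_sym (negbTE d') subr0 mul0r.
Qed.

Lemma circ_zero (R : numDomainType) N P (src dst : 'I_P -> 'I_N) (d : 'I_P -> R)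
  (hc : forall n, \sum_l ((n == src l)%:R - (n == dst l)%:R) * d l = 0)
  (hcyc : forall vs es, is_cycle src dst vs es -> exists2 l, l \in es & d l = 0) :
  forall l, d l = 0.
Proof.
move=> l0; apply/eqP; apply: contraT => nz.
pose S := [pred l | d l != 0].
have nocyc : forall vs es, is_cycle src dst vs es -> all S es -> False.
  move=> vs es /hcyc [l lin dl] /allP /(_ l lin).
  by rewrite /= dl eqxx.
have key : forall k, exists vs es, is_path src dst vs es /\ all S es /\ size es = k.+1.
  elim => [|k [vs [es [hp [hS hk]]]]].
  - have := @path_step N P src dst S (src l0) [::] [::] l0.
    case.
    + by split => //.
    + done.
    + exact: nz.
    + by rewrite /touches eqxx.
    + done.
    + by move=> [vs' [es' [hc' hS']]]; case: (nocyc _ _ hc' hS').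
    + move=> [w hp]; exists [:: w; src l0], [:: l0]; rewrite /= nz; done.
  - case: vs hp => [[]//|v0 vs] hp.
    case: es hS hk hp => [//|e0 es] hS hk hp.
    have de0 : d e0 != 0 by case/andP: hS.
    have J0 : joins src dst e0 v0 (nth v0 (v0 :: vs) 1).
      by case: hp => _ _ _ /(_ 0 erefl v0 e0).
    have sd : src e0 != dst e0.
      apply/negP => /(joins_loop J0) /eqP.
      case: hp => hsz hu _ _.
      rewrite -[X in X == _]/(nth v0 (v0 :: vs) 0) nth_uniq //.
      by rewrite hsz.
    have [l /and3P[dl le0 tl]] := degree hc de0 sd (joins_touchl J0).
    have := @path_step N P src dst S v0 vs (e0 :: es) l hp hS dl tl (fun _ => le0).
    case.
    + by move=> [vs' [es' [hc' hS']]]; case: (nocyc _ _ hc' hS').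
    + move=> [w hp']; exists [:: w, v0 & vs], [:: l, e0 & es].
      split => //; split; [by rewrite /= dl | by move: hk => /= ->].
have [vs [es [[hsz hu _ _] [_ hk]]]] := key N.
have := max_card (mem vs).
by rewrite card_ord (card_uniqP hu) hsz hk ltnNge leqnSn.
Qed.

Lemma g_strict (R : realFieldType) (x y : R) : x < y ->
  Num.sg x * x ^+ 2 < Num.sg y * y ^+ 2.
Proof.
move=> xy.
have [x0|x0|x0] := ltrgtP x 0; have [y0|y0|y0] := ltrgtP y 0;
  rewrite ?(ltr0_sg x0) ?(gtr0_sg x0) ?(ltr0_sg y0) ?(gtr0_sg y0) ?x0 ?y0 ?sgr0; try lra.
all: try (have h1 : 0 < (y - x) * (- (x + y)) by apply: mulr_gt0; lra).
all: try (have h1 : 0 < (y - x) * (x + y) by apply: mulr_gt0; lra).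
all: nra.
Qed.

Lemma g_mono (R : realFieldType) (x y : R) : x <= y ->
  Num.sg x * x ^+ 2 <= Num.sg y * y ^+ 2.
Proof.
by rewrite le_eqVlt => /orP[/eqP->//|/g_strict/ltW].
Qed.

Lemma g_inj (R : realFieldType) (x y : R) :
  Num.sg x * x ^+ 2 = Num.sg y * y ^+ 2 -> x = y.
Proof.
move=> e; case: (ltgtP x y) => // h; have := g_strict h; by rewrite e ltxx.
Qed.

Lemma consE (R : realFieldType) N P (src dst : 'I_P -> 'I_N) (phi : 'cV[R]_P) q :
  (incidence R src dst)^T *m phi = q ->
  forall n, \sum_l ((n == src l)%:R - (n == dst l)%:R) * phi l 0 = q n 0.
Proof.
move=> <- n; rewrite !mxE; apply: eq_bigr => l _; by rewrite !mxE.
Qed.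

Lemma consD (R : realFieldType) N P (src dst : 'I_P -> 'I_N) (phi1 phi2 : 'cV[R]_P) q :
  (incidence R src dst)^T *m phi1 = q ->
  (incidence R src dst)^T *m phi2 = q ->
  forall n, \sum_l ((n == src l)%:R - (n == dst l)%:R) * (phi1 l 0 - phi2 l 0) = 0.
Proof.
move=> A1 A2 n.
under eq_bigr do rewrite mulrBr.
by rewrite sumrB (consE A1) (consE A2) subrr.
Qed.

Lemma sum_pred1 (R : realFieldType) N (Pr : pred 'I_N) (s : 'I_N) :
  \sum_(n | Pr n) (n == s)%:R = (Pr s)%:R :> R.
Proof.
rewrite big_mkcond /= (bigD1 s) //= big1 ?addr0.
  by rewrite eqxx; case: (Pr s).
by move=> i /negbTE ->; case: ifP.
Qed.

Lemma psi_le (R : realFieldType) N P (src dst : 'I_P -> 'I_N) (comp : {set 'I_P})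
  (hconn : connected_graph src dst) (r : 'I_N) (psir : R) q a alpha
  (ha : forall l, l \notin comp -> 0 < a l)
  (halpha : forall l, l \in comp -> 0 < alpha l) phi1 phi2 psi1 psi2 :
  gas_flow_solution src dst comp r psir q a alpha phi1 psi1 ->
  gas_flow_solution src dst comp r psir q a alpha phi2 psi2 ->
  forall n, psi1 n 0 <= psi2 n 0.
Proof.
move=> [r1 A1 L1 _ C1] [r2 A2 L2 _ C2].
pose u n := psi1 n 0 - psi2 n 0.
pose d l := phi1 l 0 - phi2 l 0.
pose Pos := [pred n | 0 < u n].
have hc := consD A1 A2.
have hsum : \sum_l d l * ((Pos (src l))%:R - (Pos (dst l))%:R) = 0.
  transitivity (\sum_(n | Pos n) \sum_l ((n == src l)%:R - (n == dst l)%:R) * d l).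
    rewrite exchange_big /=; apply: eq_bigr => l _.
    by rewrite -mulr_suml sumrB !sum_pred1 mulrC.
  by rewrite big1.
have edge : forall l, (Pos (src l) && ~~ Pos (dst l) -> 0 < d l) /\
                      (~~ Pos (src l) && Pos (dst l) -> d l < 0).
  move=> l; case: (boolP (l \in comp)) => lc.
    have [e1 _] := C1 l lc; have [e2 _] := C2 l lc.
    have hu : u (dst l) = alpha l * u (src l) by rewrite /u e1 e2 mulrBr.
    have al := halpha l lc.
    rewrite /Pos /= hu pmulr_rgt0 //; by split; case: (0 < u (src l)).
  have e1 : psi1 (src l) 0 - psi1 (dst l) 0 = a l * (Num.sg (phi1 l 0) * phi1 l 0 ^+ 2).
    by rewrite mulrA; apply: L1.
  have e2 : psi2 (src l) 0 - psi2 (dst l) 0 = a l * (Num.sg (phi2 l 0) * phi2 l 0 ^+ 2).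
    by rewrite mulrA; apply: L2.
  set g1 := Num.sg (phi1 l 0) * phi1 l 0 ^+ 2 in e1 *.
  set g2 := Num.sg (phi2 l 0) * phi2 l 0 ^+ 2 in e2 *.
  have hu : u (src l) - u (dst l) = a l * (g1 - g2).
    rewrite /u mulrBr; lra.
  have al := ha l lc.
  rewrite /Pos /=; split => /andP[h1 h2].
  - rewrite -leNgt in h2; rewrite /d subr_gt0 ltNge; apply/negP => hle.
    have : a l * (g1 - g2) <= 0 by rewrite pmulr_rle0 // subr_le0 g_mono.
    lra.
  - rewrite -leNgt in h1; rewrite /d subr_lt0 ltNge; apply/negP => hle.
    have : 0 <= a l * (g1 - g2) by rewrite pmulr_rge0 // subr_ge0 g_mono.
    lra.
have tge : forall l, 0 <= d l * ((Pos (src l))%:R - (Pos (dst l))%:R).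
  move=> l; move: (edge l); case: (Pos (src l)); case: (Pos (dst l)); move=> /= [h1 h2].
  - by rewrite subrr mulr0.
  - by rewrite subr0 mulr1 ltW // h1.
  - by rewrite sub0r mulrN1 oppr_ge0 ltW // h2.
  - by rewrite subrr mulr0.
have same : forall l, Pos (src l) = Pos (dst l).
  move=> l; apply/eqP; apply: contraT => ne.
  have := psumr_eq0P (P := predT) (fun i _ => tge i) hsum (i := l) isT.
  move: (edge l) ne; case: (Pos (src l)); case: (Pos (dst l)); move=> //= [h1 h2] _.
  - by rewrite subr0 mulr1 => e; move: (h1 isT); rewrite e ltxx.
  - by rewrite sub0r mulrN1 => /eqP; rewrite oppr_eq0 => /eqP e; move: (h2 isT); rewrite e ltxx.
have cl : closed (uadj src dst) Pos.
  move=> x y /existsP [l]; rewrite /joins => /orP[]/andP[/eqP<- /eqP<-].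
    exact: same.
  exact: esym (same l).
move=> n; have := closed_connect cl (hconn r n).
rewrite !inE /= /u r1 r2 subrr ltxx => /esym/negbT.
by rewrite -leNgt subr_le0.
Qed.

Theorem theorem1 (R : realFieldType) (N P : nat) (src dst : 'I_P -> 'I_N)
    (comp : {set 'I_P})
    (hconn : connected_graph src dst)
    (hcyc : forall (vs : seq 'I_N) (es : seq 'I_P),
        is_cycle src dst vs es -> exists2 l, l \in es & l \notin comp)
    (r : 'I_N) (psir : R) (q : 'cV[R]_N)
    (hq : \sum_(n < N) q n 0 = 0)
    (a alpha : 'I_P -> R)
    (ha : forall l, l \notin comp -> 0 < a l)
    (halpha : forall l, l \in comp -> 0 < alpha l)
    (phi1 phi2 : 'cV[R]_P) (psi1 psi2 : 'cV[R]_N) :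
  gas_flow_solution src dst comp r psir q a alpha phi1 psi1 ->
  gas_flow_solution src dst comp r psir q a alpha phi2 psi2 ->
  phi1 = phi2 /\ psi1 = psi2.
Proof.
move=> s1 s2.
have le12 := psi_le hconn ha halpha s1 s2.
have le21 := psi_le hconn ha halpha s2 s1.
have psiE : psi1 = psi2.
  by apply/matrixP => i j; rewrite (ord1 j); apply/le_anti; rewrite le12 le21.
split => //.
move: s1 s2 => [r1 A1 L1 _ C1] [r2 A2 L2 _ C2].
have lossy : forall l, l \notin comp -> phi1 l 0 = phi2 l 0.
  move=> l lc; have := L1 l lc; rewrite psiE (L2 l lc) -!mulrA.
  have anz : a l != 0 by rewrite gt_eqF // ha.
  by move/(mulfI anz)/esym/g_inj.
apply/matrixP => i j; rewrite (ord1 j); apply/eqP; rewrite -subr_eq0; apply/eqP.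
apply: (circ_zero (d := fun l => phi1 l 0 - phi2 l 0)) (consD A1 A2) _ i.
move=> vs es /hcyc [l lin lc]; exists l => //.
by rewrite lossy // subrr.
Qed.
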